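(* There exists a set $A\subseteq\omega^\omega$ (e.g. $A=\{\bar 0\}$, the singleton of the all-zero sequence) such that both $A$ and its complement $\omega^\omega\setminus A$ are computably enumerable in Kleene's second model $\mathcal{K}_2$, but $A$ is not decidable in $\mathcal{K}_2$.
   Context: Kleene's second model $\mathcal{K}_2$ is the pca with underlying set $\omega^\omega$ in which $\alpha\cdot\beta$ is the result of applying the continuous (partial) functional coded by $\alpha$ to $\beta$. In a pca $\mathcal{A}$, with $\mathsf{true}=k$ and $\mathsf{false}=ki$ ($i=skk$, where $k,s$ are the standard combinators), a set $A\subseteq\mathcal{A}$ is decidable if there is a total $c\in\mathcal{A}$ with $ca=\mathsf{true}$ iff $a\in A$ and $ca=\mathsf{false}$ iff $a\notin A$; $A$ is computably enumerable (c.e.) in $\mathcal{A}$ if $A=\{a\mid ea\downarrow\}$ for some $e\in\mathcal{A}$. *)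

(* Defs.v *)
From Stdlib Require Import Arith List.
Import ListNotations.

Definition baire := nat -> nat.

Definition cpair (x y : nat) : nat := (x + y) * (x + y + 1) / 2 + y.

Fixpoint code (l : list nat) : nat :=
  match l with
  | [] => 0
  | x :: l' => S (cpair x (code l'))
  end.

Definition prefix (b : baire) (m : nat) : list nat := map b (seq 0 m).

Definition app (a b g : baire) : Prop :=
  forall n, exists m,
    0 < a (code (n :: prefix b m)) /\
    (forall m', m' < m -> a (code (n :: prefix b m')) = 0) /\
    g n = a (code (n :: prefix b m)) - 1.

Definition defined (a b : baire) : Prop := exists g, app a b g.

Definition is_k (k : baire) : Prop :=
  forall x y, exists kx, app k x kx /\ app kx y x.

Definition is_s (s : baire) : Prop :=
  forall x y, exists sx sxy, app s x sx /\ app sx y sxy /\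
    forall z w, app sxy z w <->
      exists xz yz, app x z xz /\ app y z yz /\ app xz yz w.

(* false = k i with i = s k k ; true = k *)
Definition is_false (k s f : baire) : Prop :=
  exists sk i, app s k sk /\ app sk k i /\ app k i f.

Definition decidable (k s : baire) (A : baire -> Prop) : Prop :=
  exists c f, is_false k s f /\
    (forall a, defined c a) /\
    (forall a, app c a k <-> A a) /\
    (forall a, app c a f <-> ~ A a).

Definition ce (A : baire -> Prop) : Prop :=
  exists e, forall a, defined e a <-> A a.

(* Main.v *)
Require Import Defs.
From Stdlib Require Import Arith Lia List Classical ClassicalEpsilon FunctionalExtensionality.
Import ListNotations.

Definition T (s : nat) := s * (s + 1) / 2.

Lemma T_S s : T (S s) = T s + S s.
Proof.
  unfold T. replace (S s * (S s + 1)) with (s * (s + 1) + S s * 2) by lia.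
  rewrite Nat.div_add by lia. lia.
Qed.

Lemma T_mono s s' : s < s' -> T s + s < T s'.
Proof.
  induction s' as [|s' IH]; intros H; [lia|].
  rewrite T_S. destruct (Nat.eq_dec s s'); [subst; lia|]. specialize (IH ltac:(lia)). lia.
Qed.

Lemma cpair_inj x y x' y' : cpair x y = cpair x' y' -> x = x' /\ y = y'.
Proof.
  unfold cpair. intros H. fold (T (x + y)) in H. fold (T (x' + y')) in H.
  destruct (lt_eq_lt_dec (x + y) (x' + y')) as [[Hl|He]|Hl].
  - pose proof (T_mono _ _ Hl). lia.
  - rewrite He in H. lia.
  - pose proof (T_mono _ _ Hl). lia.
Qed.

Lemma code_inj l l' : code l = code l' -> l = l'.
Proof.
  revert l'; induction l as [|x l IH]; intros [|x' l'] H; simpl in *; try discriminate; auto.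
  injection H as H. apply cpair_inj in H as [-> H]. f_equal; auto.
Qed.

Definition mk (P : nat -> list nat -> Prop) : baire := fun x =>
  if excluded_middle_informative (exists n l, x = code (n :: l) /\ P n l) then 1 else 0.

Lemma mk_pos P n l : 0 < mk P (code (n :: l)) <-> P n l.
Proof.
  unfold mk. destruct excluded_middle_informative as [[n' [l' [H1 H2]]]|H].
  - split; [|lia]. intros _. apply code_inj in H1. injection H1 as -> ->. auto.
  - split; [lia|]. intros Hp. exfalso; apply H; eauto.
Qed.

Lemma least (Q : nat -> Prop) : (exists m, Q m) -> exists m, Q m /\ forall m', m' < m -> ~ Q m'.
Proof.
  intros [m Hm]. induction m as [m IH] using lt_wf_ind.
  destruct (classic (exists m', m' < m /\ Q m')) as [[m' [H1 H2]]|H].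
  - eauto.
  - exists m. split; auto. intros m' Hm' Hq. apply H; eauto.
Qed.

Lemma mk_defined P a : defined (mk P) a <-> forall n, exists m, P n (prefix a m).
Proof.
  split.
  - intros [g Hg] n. destruct (Hg n) as [m [Hm _]]. exists m. apply mk_pos; auto.
  - intros H. exists (fun _ => 0). intros n.
    destruct (least (fun m => P n (prefix a m)) (H n)) as [m [Hm Hmin]].
    exists m. split; [apply mk_pos; auto|]. split.
    + intros m' Hm'. specialize (Hmin m' Hm').
      destruct (Nat.eq_dec (mk P (code (n :: prefix a m'))) 0) as [e|e]; auto.
      exfalso; apply Hmin, mk_pos; lia.
    + unfold mk. destruct excluded_middle_informative; [lia|].
      exfalso. apply n0. eauto.
Qed.

Lemma in_prefix a m x : In x (prefix a m) <-> exists j, j < m /\ x = a j.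
Proof.
  unfold prefix. rewrite in_map_iff. split.
  - intros [j [<- Hj]]. apply in_seq in Hj. exists j; split; [lia|auto].
  - intros [j [Hj ->]]. exists j; split; auto. apply in_seq; lia.
Qed.

Lemma app_fun a b g g' : Defs.app a b g -> Defs.app a b g' -> g = g'.
Proof.
  intros H H'. extensionality n.
  destruct (H n) as [m [Hm [Hmin He]]]. destruct (H' n) as [m' [Hm' [Hmin' He']]].
  destruct (lt_eq_lt_dec m m') as [[Hl|<-]|Hl].
  - specialize (Hmin' _ Hl); lia.
  - congruence.
  - specialize (Hmin _ Hl); lia.
Qed.

Lemma prefix_ext a a' m : (forall i, i < m -> a i = a' i) -> prefix a m = prefix a' m.
Proof.
  intros H. unfold prefix. apply map_ext_in. intros i Hi. apply in_seq in Hi. apply H; lia.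
Qed.

Lemma cont c a a' g g' n : Defs.app c a g -> Defs.app c a' g' ->
  (exists m, (forall m'', m'' <= m -> prefix a m'' = prefix a' m'') /\
     0 < c (code (n :: prefix a m)) /\ (forall m', m' < m -> c (code (n :: prefix a m')) = 0) /\
     g n = c (code (n :: prefix a m)) - 1) -> g' n = g n.
Proof.
  intros _ H' [m [Hp [Hm [Hmin He]]]].
  destruct (H' n) as [m' [Hm' [Hmin' He']]].
  destruct (lt_eq_lt_dec m m') as [[Hl|<-]|Hl].
  - specialize (Hmin' _ Hl). rewrite <- Hp in Hmin' by lia. lia.
  - rewrite He, He', Hp by lia. auto.
  - specialize (Hmin _ Hl). rewrite Hp in Hmin by lia. lia.
Qed.

Theorem mainTheorem4 :
  exists A : baire -> Prop,
    ce A /\ ce (fun a => ~ A a) /\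
    (forall k s : baire, is_k k -> is_s s -> ~ decidable k s A).
Proof.
  exists (fun a => forall i, a i = 0). split; [|split].
  - exists (mk (fun n l => length l = S n /\ forall x, In x l -> x = 0)).
    intros a. rewrite mk_defined. split.
    + intros H i. destruct (H i) as [m [Hl Hz]].
      unfold prefix in Hl. rewrite length_map, length_seq in Hl. subst m.
      apply Hz, in_prefix. exists i; split; auto.
    + intros H n. exists (S n). split.
      * unfold prefix. rewrite length_map, length_seq. auto.
      * intros x Hx. apply in_prefix in Hx as [j [_ ->]]. auto.
  - exists (mk (fun n l => exists x, In x l /\ x <> 0)).
    intros a. rewrite mk_defined. split.
    + intros H Hz. destruct (H 0) as [m [x [Hx Hne]]].
      apply in_prefix in Hx as [j [_ ->]]. auto.
    + intros H n. apply not_all_ex_not in H as [i Hi].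
      exists (S i), (a i). split; auto. apply in_prefix. exists i; split; auto.
  - intros k s Hk _ [c [f [[sk [i [_ [_ Hf]]]] [Htot [HA HnA]]]]].
    assert (Hkf : k <> f).
    { intros ->. destruct (Hk i (fun _ => 0)) as [ki [H1 H2]].
      pose proof (app_fun _ _ _ _ H1 Hf) as ->.
      destruct (Hk (fun _ => 0) (fun _ => 0)) as [kx [H3 H4]].
      pose proof (app_fun _ _ _ _ H3 H2) as ->.
      destruct (Hk (fun _ => 1) (fun _ => 0)) as [kx' [H5 H6]].
      destruct (Hk i (fun _ => 1)) as [ki' [H7 H8]].
      pose proof (app_fun _ _ _ _ H7 Hf) as ->.
      pose proof (app_fun _ _ _ _ H5 H8) as ->.
      pose proof (app_fun _ _ _ _ H4 H6) as E.
      apply (f_equal (fun h => h 0)) in E. discriminate. }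
    assert (Hn : exists n, k n <> f n).
    { apply NNPP. intros Hc. apply Hkf. extensionality n.
      apply NNPP. intros Hne. apply Hc. eauto. }
    destruct Hn as [n Hn].
    assert (H0 : Defs.app c (fun _ => 0) k) by (apply HA; auto).
    destruct (H0 n) as [m [Hm [Hmin He]]].
    set (a' := fun j => if j <? m then 0 else 1).
    assert (Ha' : Defs.app c a' f).
    { apply HnA. intros Hz. specialize (Hz m). unfold a' in Hz.
      rewrite Nat.ltb_irrefl in Hz. discriminate. }
    apply Hn. symmetry. eapply (cont c (fun _ => 0) a' k f n H0 Ha').
    exists m. split; [|auto].
    intros m'' Hm''. apply prefix_ext. intros j Hj. unfold a'.
    destruct (Nat.ltb_spec j m); lia.
Qed.
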